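(* For every c.e. transitive relation $\prec$ on $\omega$ there is a computable strict partial order $\sqsubset$ on $\omega$ such that the spaces of ideals $\mathcal{I}(\prec)$ and $\mathcal{I}(\sqsubset)$ are computably homeomorphic.
   Context: For a transitive relation $\prec$ on a set $S$, an ideal is a set $I\subseteq S$ that is non-empty, a lower set ($b\prec a\in I$ implies $b\in I$), and directed (for all $a,b\in I$ there is $c\in I$ with $a\prec c$ and $b\prec c$). $\mathcal{I}(\prec)$ is the set of all ideals with the topology generated by the basic open sets $[n]_\prec=\{I\in\mathcal{I}(\prec)\mid n\in I\}$, $n\in S$; it is regarded as an effective space with these basic open sets numbered by $n$. An effective space is a pair $(X,\beta)$ with $X$ a countably based $T_0$ space and $\beta:\omega\to P(X)$ a numbering of a base such that $\beta(i)\cap\beta(j)=\bigcup\beta(A_{ij})$ for a uniformly c.e. family of sets $A_{ij}$. A function $f:(X,\beta)\to(Y,\gamma)$ is computable if there is a uniformly c.e. family $(B_n)$ with $f^{-1}(\gamma(n))=\bigcup\beta(B_n)$ for all $n$; a computable homeomorphism is a homeomorphism such that it and its inverse are computable. *)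

(* Defs.v *)
From Stdlib Require Import List Arith.
Import ListNotations.

Inductive prf : Type :=
| PZero : prf
| PSucc : prf
| PProj : nat -> prf
| PComp : prf -> list prf -> prf
| PPrim : prf -> prf -> prf
| PMu   : prf -> prf.

Inductive eval : prf -> list nat -> nat -> Prop :=
| ev_zero : forall v, eval PZero v 0
| ev_succ : forall x v, eval PSucc (x :: v) (S x)
| ev_proj : forall i v x, nth_error v i = Some x -> eval (PProj i) v x
| ev_comp : forall f gs v ys y,
    evals gs v ys -> eval f ys y -> eval (PComp f gs) v y
| ev_prim0 : forall f g v y, eval f v y -> eval (PPrim f g) (0 :: v) y
| ev_primS : forall f g n v z y,
    eval (PPrim f g) (n :: v) z -> eval g (n :: z :: v) y ->
    eval (PPrim f g) (S n :: v) y
| ev_mu : forall f v n,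
    eval f (n :: v) 0 ->
    (forall m, m < n -> exists k, eval f (m :: v) (S k)) ->
    eval (PMu f) v n
with evals : list prf -> list nat -> list nat -> Prop :=
| evs_nil : forall v, evals [] v []
| evs_cons : forall g gs v y ys,
    eval g v y -> evals gs v ys -> evals (g :: gs) v (y :: ys).

Definition halts (e : prf) (v : list nat) : Prop := exists y, eval e v y.

Definition ce_rel (R : nat -> nat -> Prop) : Prop :=
  exists e, forall a b, R a b <-> halts e [a; b].

Definition computable_rel (R : nat -> nat -> Prop) : Prop :=
  exists e, forall a b, (R a b -> eval e [a; b] 1) /\ (~ R a b -> eval e [a; b] 0).

Definition transitive_rel (R : nat -> nat -> Prop) : Prop :=
  forall a b c, R a b -> R b c -> R a c.

Definition strict_partial_order (R : nat -> nat -> Prop) : Prop :=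
  (forall a, ~ R a a) /\ transitive_rel R.

Definition is_ideal (R : nat -> nat -> Prop) (I : nat -> Prop) : Prop :=
  (exists a, I a) /\
  (forall a b, R b a -> I a -> I b) /\
  (forall a b, I a -> I b -> exists c, I c /\ R a c /\ R b c).

(* The space I(R): its points; the basic open [n]_R is {I | n \in I}. *)
Definition ideals (R : nat -> nat -> Prop) : Type := { I : nat -> Prop | is_ideal R I }.

(* f : (I(R), [.]_R) -> (I(S), [.]_S) is computable: there is a uniformly c.e.
   family (B_n) (B_n = {m | e halts on [n; m]}) with
   f^{-1}([n]_S) = \bigcup_{m \in B_n} [m]_R. *)
Definition computable_map {R S : nat -> nat -> Prop} (f : ideals R -> ideals S) : Prop :=
  exists e, forall (n : nat) (I : ideals R),
    proj1_sig (f I) n <-> exists m, halts e [n; m] /\ proj1_sig I m.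

(* Computable homeomorphism: a bijection which, together with its inverse, is
   computable (computable maps are continuous, so this is a homeomorphism). *)
Definition computably_homeomorphic (R S : nat -> nat -> Prop) : Prop :=
  exists (f : ideals R -> ideals S) (g : ideals S -> ideals R),
    (forall x, g (f x) = x) /\ (forall y, f (g y) = y) /\
    computable_map f /\ computable_map g.

(* Main.v *)
Require Import Defs.
From Stdlib Require Import List Arith Lia PeanoNat.
From Stdlib Require Import FunctionalExtensionality PropExtensionality ProofIrrelevance.
Import ListNotations.

Definition computes (p : prf) (k : nat) (P : list nat -> nat) : Prop :=
  forall v, length v = k -> eval p v (P v).

Lemma computes_ext p k P Q : computes p k P ->
  (forall v, length v = k -> P v = Q v) -> computes p k Q.
Proof. intros H E v Hv. rewrite <- E by exact Hv. apply H, Hv. Qed.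

Lemma c_zero k : computes PZero k (fun _ => 0).
Proof. intros v _. constructor. Qed.

Lemma c_proj i k : i < k -> computes (PProj i) k (fun v => nth i v 0).
Proof. intros Hi v Hv. constructor. apply nth_error_nth'. lia. Qed.

Lemma evals_of gs Gs k v : Forall2 (fun g G => computes g k G) gs Gs ->
  length v = k -> evals gs v (map (fun G => G v) Gs).
Proof. intros H Hv. induction H; simpl; constructor; auto. Qed.

Lemma c_comp f gs k m F Gs : Forall2 (fun g G => computes g k G) gs Gs ->
  length gs = m -> computes f m F ->
  computes (PComp f gs) k (fun v => F (map (fun G => G v) Gs)).
Proof.
  intros H Hl Hf v Hv. econstructor. apply (evals_of _ Gs k); eauto.
  apply Hf. rewrite length_map. rewrite <- (Forall2_length H). auto.
Qed.

Fixpoint primrec (B G : list nat -> nat) (n : nat) (w : list nat) : nat :=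
  match n with 0 => B w | S m => G (m :: primrec B G m w :: w) end.

Lemma c_prim f g k F G : computes f k F -> computes g (S (S k)) G ->
  computes (PPrim f g) (S k) (fun v => primrec F G (hd 0 v) (tl v)).
Proof.
  intros Hf Hg v Hv. destruct v as [|n w]; simpl in Hv; [discriminate|].
  injection Hv as Hv. simpl. induction n; simpl.
  - constructor. apply Hf, Hv.
  - econstructor. exact IHn. apply Hg. simpl. lia.
Qed.

Lemma c_S p k P : computes p k P -> computes (PComp PSucc [p]) k (fun v => S (P v)).
Proof. intros H v Hv. econstructor. constructor. apply H, Hv. constructor. constructor. Qed.

Fixpoint cst n := match n with 0 => PZero | S m => PComp PSucc [cst m] end.
Lemma c_cst n k : computes (cst n) k (fun _ => n).
Proof. induction n; simpl. apply c_zero. apply (c_S _ _ _ IHn). Qed.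

Lemma c_ap1 OP (op : nat -> nat) p k P :
  computes OP 1 (fun v => op (nth 0 v 0)) -> computes p k P ->
  computes (PComp OP [p]) k (fun v => op (P v)).
Proof.
  intros HO Hp. eapply computes_ext. eapply c_comp with (Gs := [P]).
  repeat constructor; auto. reflexivity. exact HO. intros; reflexivity.
Qed.

Lemma c_ap2 OP (op : nat -> nat -> nat) p q k P Q :
  computes OP 2 (fun v => op (nth 0 v 0) (nth 1 v 0)) -> computes p k P -> computes q k Q ->
  computes (PComp OP [p; q]) k (fun v => op (P v) (Q v)).
Proof.
  intros HO Hp Hq. eapply computes_ext. eapply c_comp with (Gs := [P; Q]).
  repeat constructor; auto. reflexivity. exact HO. intros; reflexivity.
Qed.

Ltac lenv v Hv := destruct v as [|? v]; simpl in Hv; try discriminate; injection Hv as Hv.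

Definition ADD := PPrim (PProj 0) (PComp PSucc [PProj 1]).
Lemma c_ADD : computes ADD 2 (fun v => nth 0 v 0 + nth 1 v 0).
Proof.
  eapply computes_ext. apply c_prim. apply c_proj; lia. apply c_S, c_proj; lia.
  intros v Hv. lenv v Hv. lenv v Hv. destruct v; [|discriminate]. simpl.
  induction n; simpl; auto.
Qed.

Definition MUL := PPrim PZero (PComp ADD [PProj 1; PProj 2]).
Lemma c_MUL : computes MUL 2 (fun v => nth 0 v 0 * nth 1 v 0).
Proof.
  eapply computes_ext. apply c_prim. apply c_zero.
  eapply (c_ap2 _ Nat.add _ _ _ _ _ c_ADD); apply c_proj; lia.
  intros v Hv. lenv v Hv. lenv v Hv. destruct v; [|discriminate]. simpl.
  induction n; simpl; auto. rewrite IHn. lia.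
Qed.

Definition PRED := PPrim PZero (PProj 0).
Lemma c_PRED : computes PRED 1 (fun v => pred (nth 0 v 0)).
Proof.
  eapply computes_ext. apply c_prim. apply c_zero. apply c_proj; lia.
  intros v Hv. lenv v Hv. destruct v; [|discriminate]. destruct n; reflexivity.
Qed.

Definition SUBR := PPrim (PProj 0) (PComp PRED [PProj 1]).
Definition MONUS := PComp SUBR [PProj 1; PProj 0].
Lemma c_MONUS : computes MONUS 2 (fun v => nth 0 v 0 - nth 1 v 0).
Proof.
  assert (H : computes SUBR 2 (fun v => nth 1 v 0 - nth 0 v 0)).
  { eapply computes_ext. apply c_prim. apply c_proj; lia.
    eapply (c_ap1 _ pred _ _ _ c_PRED), c_proj; lia.
    intros v Hv. lenv v Hv. lenv v Hv. destruct v; [|discriminate]. simpl.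
    induction n; simpl; [lia|]. rewrite IHn. lia. }
  eapply computes_ext. eapply (c_ap2 _ (fun a b => b - a) _ _ _ _ _ H); apply c_proj; lia.
  intros; reflexivity.
Qed.

Definition sg (n : nat) := match n with 0 => 0 | S _ => 1 end.
Definition nsg (n : nat) := match n with 0 => 1 | S _ => 0 end.

Definition SG := PPrim PZero (cst 1).
Lemma c_SG : computes SG 1 (fun v => sg (nth 0 v 0)).
Proof.
  eapply computes_ext. apply c_prim. apply c_zero. apply c_cst.
  intros v Hv. lenv v Hv. destruct v; [|discriminate]. destruct n; reflexivity.
Qed.
Definition NSG := PPrim (cst 1) PZero.
Lemma c_NSG : computes NSG 1 (fun v => nsg (nth 0 v 0)).
Proof.
  eapply computes_ext. apply c_prim. apply c_cst. apply c_zero.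
  intros v Hv. lenv v Hv. destruct v; [|discriminate]. destruct n; reflexivity.
Qed.

Definition b2n (b : bool) := if b then 1 else 0.

Definition LTB := PComp SG [PComp MONUS [PProj 1; PProj 0]].
Lemma c_LTB : computes LTB 2 (fun v => b2n (nth 0 v 0 <? nth 1 v 0)).
Proof.
  eapply computes_ext. eapply (c_ap1 _ sg _ _ _ c_SG).
  eapply (c_ap2 _ Nat.sub _ _ _ _ _ c_MONUS); apply c_proj; lia.
  intros v _. simpl. destruct (Nat.ltb_spec (nth 0 v 0) (nth 1 v 0));
  destruct (nth 1 v 0 - nth 0 v 0) eqn:E; simpl; auto; lia.
Qed.

Definition EQB := PComp NSG [PComp ADD [PComp MONUS [PProj 1; PProj 0]; PComp MONUS [PProj 0; PProj 1]]].
Lemma c_EQB : computes EQB 2 (fun v => b2n (nth 0 v 0 =? nth 1 v 0)).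
Proof.
  eapply computes_ext. eapply (c_ap1 _ nsg _ _ _ c_NSG).
  eapply (c_ap2 _ Nat.add _ _ _ _ _ c_ADD); eapply (c_ap2 _ Nat.sub _ _ _ _ _ c_MONUS); apply c_proj; lia.
  intros v _. simpl. destruct (Nat.eqb_spec (nth 0 v 0) (nth 1 v 0));
  destruct (nth 1 v 0 - nth 0 v 0 + (nth 0 v 0 - nth 1 v 0)) eqn:E; simpl; auto; lia.
Qed.

Definition POW2 := PPrim (cst 1) (PComp ADD [PProj 1; PProj 1]).
Lemma c_POW2 : computes POW2 1 (fun v => 2 ^ nth 0 v 0).
Proof.
  eapply computes_ext. apply c_prim. apply c_cst.
  eapply (c_ap2 _ Nat.add _ _ _ _ _ c_ADD); apply c_proj; lia.
  intros v Hv. lenv v Hv. destruct v; [|discriminate]. simpl.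
  induction n; simpl; auto. rewrite IHn. lia.
Qed.

Lemma half_par n : S n / 2 = n / 2 + n mod 2 /\ S n mod 2 = nsg (n mod 2).
Proof.
  pose proof (Nat.div_mod n 2 ltac:(lia)). pose proof (Nat.mod_upper_bound n 2 ltac:(lia)).
  destruct (n mod 2) as [|[|]] eqn:E; [| |lia]; unfold nsg.
  - split. symmetry. rewrite Nat.add_0_r. apply (Nat.div_unique _ _ _ 1); lia.
    symmetry. apply (Nat.mod_unique _ _ (n/2)); lia.
  - split. symmetry. apply (Nat.div_unique _ _ _ 0); lia.
    symmetry. apply (Nat.mod_unique _ _ (n/2 + 1)); lia.
Qed.

Definition PAR := PPrim PZero (PComp NSG [PProj 1]).
Lemma c_PAR : computes PAR 1 (fun v => nth 0 v 0 mod 2).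
Proof.
  eapply computes_ext. apply c_prim. apply c_zero.
  eapply (c_ap1 _ nsg _ _ _ c_NSG); apply c_proj; lia.
  intros v Hv. lenv v Hv. destruct v; [|discriminate]. simpl.
  induction n; simpl; auto. rewrite IHn. symmetry. apply half_par.
Qed.

Definition HALF := PPrim PZero (PComp ADD [PProj 1; PComp PAR [PProj 0]]).
Lemma c_HALF : computes HALF 1 (fun v => nth 0 v 0 / 2).
Proof.
  eapply computes_ext. apply c_prim. apply c_zero.
  eapply (c_ap2 _ Nat.add _ _ _ _ _ c_ADD). apply c_proj; lia.
  eapply (c_ap1 _ (fun a => a mod 2) _ _ _ c_PAR); apply c_proj; lia.
  intros v Hv. lenv v Hv. destruct v; [|discriminate]. simpl.
  induction n; simpl; auto. rewrite IHn. symmetry. apply half_par.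
Qed.

Definition SHIFT := PPrim (PProj 0) (PComp HALF [PProj 1]).
Lemma c_SHIFT : computes SHIFT 2 (fun v => nth 1 v 0 / 2 ^ nth 0 v 0).
Proof.
  eapply computes_ext. apply c_prim. apply c_proj; lia.
  eapply (c_ap1 _ (fun a => a / 2) _ _ _ c_HALF); apply c_proj; lia.
  intros v Hv. lenv v Hv. lenv v Hv. destruct v; [|discriminate]. cbn [hd tl nth].
  induction n; cbn [primrec nth]. rewrite Nat.pow_0_r, Nat.div_1_r; auto. rewrite IHn.
  rewrite Nat.Div0.div_div. f_equal. rewrite Nat.pow_succ_r'. lia.
Qed.

Definition bit H w := (H / 2 ^ w) mod 2.
Definition BIT := PComp PAR [PComp SHIFT [PProj 1; PProj 0]].
Lemma c_BIT : computes BIT 2 (fun v => bit (nth 0 v 0) (nth 1 v 0)).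
Proof.
  eapply computes_ext. eapply (c_ap1 _ (fun a => a mod 2) _ _ _ c_PAR).
  eapply (c_ap2 _ (fun a b => b / 2 ^ a) _ _ _ _ _ c_SHIFT); apply c_proj; lia.
  intros; reflexivity.
Qed.
Lemma l_add p q k P Q : computes p k P -> computes q k Q -> computes (PComp ADD [p;q]) k (fun v => P v + Q v).
Proof. apply (c_ap2 _ Nat.add _ _ _ _ _ c_ADD). Qed.
Lemma l_mul p q k P Q : computes p k P -> computes q k Q -> computes (PComp MUL [p;q]) k (fun v => P v * Q v).
Proof. apply (c_ap2 _ Nat.mul _ _ _ _ _ c_MUL). Qed.
Lemma l_ltb p q k P Q : computes p k P -> computes q k Q -> computes (PComp LTB [p;q]) k (fun v => b2n (P v <? Q v)).
Proof. apply (c_ap2 _ (fun a b => b2n (a <? b)) _ _ _ _ _ c_LTB). Qed.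
Lemma l_eqb p q k P Q : computes p k P -> computes q k Q -> computes (PComp EQB [p;q]) k (fun v => b2n (P v =? Q v)).
Proof. apply (c_ap2 _ (fun a b => b2n (a =? b)) _ _ _ _ _ c_EQB). Qed.
Lemma l_bit p q k P Q : computes p k P -> computes q k Q -> computes (PComp BIT [p;q]) k (fun v => bit (P v) (Q v)).
Proof. apply (c_ap2 _ bit _ _ _ _ _ c_BIT). Qed.
Lemma l_pred p k P : computes p k P -> computes (PComp PRED [p]) k (fun v => pred (P v)).
Proof. apply (c_ap1 _ pred _ _ _ c_PRED). Qed.
Lemma l_sg p k P : computes p k P -> computes (PComp SG [p]) k (fun v => sg (P v)).
Proof. apply (c_ap1 _ sg _ _ _ c_SG). Qed.
Lemma l_nsg p k P : computes p k P -> computes (PComp NSG [p]) k (fun v => nsg (P v)).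
Proof. apply (c_ap1 _ nsg _ _ _ c_NSG). Qed.
Lemma l_pow2 p k P : computes p k P -> computes (PComp POW2 [p]) k (fun v => 2 ^ P v).
Proof. apply (c_ap1 _ (fun a => 2 ^ a) _ _ _ c_POW2). Qed.

Definition projs i c := map PProj (seq i c).
Lemma length_projs i c : length (projs i c) = c.
Proof. unfold projs. rewrite length_map, length_seq. reflexivity. Qed.

Definition nths (u : list nat) i c := map (fun j => nth j u 0) (seq i c).

Lemma projs_F2 i c K : i + c <= K ->
  Forall2 (fun g G => computes g K G) (projs i c) (map (fun j (v : list nat) => nth j v 0) (seq i c)).
Proof.
  revert i. induction c; intros i Hi; simpl; constructor.
  apply c_proj; lia. apply IHc; lia.
Qed.

Lemma map_projs_eval i c (v : list nat) :
  map (fun G => G v) (map (fun j (v : list nat) => nth j v 0) (seq i c)) = nths v i c.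
Proof. unfold nths. rewrite map_map. reflexivity. Qed.

Lemma nths_app (l pre : list nat) : nths (pre ++ l) (length pre) (length l) = l.
Proof.
  revert pre. induction l; intros pre; simpl; auto. unfold nths in *. simpl.
  rewrite app_nth2 by lia. rewrite Nat.sub_diag. simpl. f_equal.
  specialize (IHl (pre ++ [a])). rewrite <- app_assoc in IHl. simpl in IHl.
  rewrite length_app in IHl. simpl in IHl. rewrite Nat.add_1_r in IHl. exact IHl.
Qed.

Lemma nths_1 (a : nat) v : nths (a :: v) 1 (length v) = v.
Proof. apply (nths_app v [a]). Qed.
Lemma nths_2 (a b : nat) v : nths (a :: b :: v) 2 (length v) = v.
Proof. apply (nths_app v [a;b]). Qed.
Lemma nths_3 (a b c : nat) v : nths (a :: b :: c :: v) 3 (length v) = v.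
Proof. apply (nths_app v [a;b;c]). Qed.

Fixpoint bsum (f : nat -> nat) n := match n with 0 => 0 | S m => bsum f m + f m end.

Definition BSUM h k := PPrim PZero (PComp ADD [PProj 1; PComp h (PProj 0 :: projs 2 k)]).
Lemma c_BSUM h k Hh : computes h (S k) Hh ->
  computes (BSUM h k) (S k) (fun v => bsum (fun i => Hh (i :: tl v)) (hd 0 v)).
Proof.
  intros Hc. eapply computes_ext. apply c_prim. apply c_zero.
  apply l_add. apply c_proj; lia.
  eapply c_comp. constructor. apply c_proj; lia. apply projs_F2. lia.
  2: exact Hc. simpl. unfold projs. rewrite length_map, length_seq. reflexivity.
  intros v Hv. destruct v as [|n ctx]; simpl in Hv; [discriminate|]. injection Hv as Hv.
  cbn [hd tl]. induction n; cbn [primrec bsum]; auto. rewrite IHn. f_equal.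
  cbn [map nth]. rewrite map_projs_eval. subst k. rewrite nths_2. reflexivity.
Qed.

Fixpoint first (x : nat) : nat :=
  match x with 0 => 0 | S y => nsg (first y) * S y + pred (first y) end.
Definition FIRST := PPrim PZero (PComp ADD [PComp MUL [PComp NSG [PProj 1]; PComp PSucc [PProj 0]]; PComp PRED [PProj 1]]).
Lemma c_FIRST : computes FIRST 1 (fun v => first (nth 0 v 0)).
Proof.
  eapply computes_ext. apply c_prim. apply c_zero.
  apply l_add. apply l_mul. apply l_nsg, c_proj; lia. apply c_S, c_proj; lia.
  apply l_pred, c_proj; lia.
  intros v Hv. lenv v Hv. destruct v; [|discriminate]. cbn [hd tl nth].
  induction n; cbn [primrec nth first]; auto; rewrite IHn; reflexivity.
Qed.
Lemma l_first p k P : computes p k P -> computes (PComp FIRST [p]) k (fun v => first (P v)).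
Proof. apply (c_ap1 _ first _ _ _ c_FIRST). Qed.
Definition allnz (l : list nat) := fold_right (fun r acc => sg r * acc) 1 l.
Definition muStep (z j s : nat) := z + nsg z * (nsg s + sg s * nsg (pred s) * S (S j)).

Fixpoint F (e : prf) (k t : nat) (v : list nat) {struct e} : nat :=
  match e with
  | PZero => 1
  | PSucc => match k with 0 => 0 | S _ => S (S (hd 0 v)) end
  | PProj i => if i <? k then S (nth i v 0) else 0
  | PComp f gs => allnz (map (fun g => F g k t v) gs) *
                  F f (length gs) t (map (fun g => pred (F g k t v)) gs)
  | PPrim f g => match k with 0 => 0 | S k' =>
       primrec (fun u => F f k' (hd 0 u) (tl u))
               (fun u => sg (nth 1 u 0) * F g (S (S k')) (nth 2 u 0)
                          (nth 0 u 0 :: pred (nth 1 u 0) :: nths u 3 k'))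
               (hd 0 v) (t :: tl v) end
  | PMu f => pred (primrec (fun _ => 0)
               (fun u => muStep (nth 1 u 0) (nth 0 u 0)
                          (F f (S k) (nth 2 u 0) (nth 0 u 0 :: nths u 3 k)))
               t (t :: v))
  end.

Definition allnzP (l : list prf) : prf :=
  fold_right (fun c acc => PComp MUL [PComp SG [c]; acc]) (cst 1) l.

Definition muStepP (zp jp sp : prf) : prf :=
  PComp ADD [zp; PComp MUL [PComp NSG [zp];
     PComp ADD [PComp NSG [sp]; PComp MUL [PComp MUL [PComp SG [sp]; PComp NSG [PComp PRED [sp]]];
                                           PComp PSucc [PComp PSucc [jp]]]]]].

Fixpoint C (e : prf) (k : nat) {struct e} : prf :=
  match e with
  | PZero => cst 1
  | PSucc => match k with 0 => PZero | S _ => PComp PSucc [PComp PSucc [PProj 1]] end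
  | PProj i => if i <? k then PComp PSucc [PProj (S i)] else PZero
  | PComp f gs => PComp MUL [allnzP (map (fun g => C g k) gs);
                             PComp (C f (length gs)) (PProj 0 :: map (fun g => PComp PRED [C g k]) gs)]
  | PPrim f g => match k with 0 => PZero | S k' =>
      PComp (PPrim (C f k')
                   (PComp MUL [PComp SG [PProj 1];
                               PComp (C g (S (S k'))) (PProj 2 :: PProj 0 :: PComp PRED [PProj 1] :: projs 3 k')]))
            (PProj 1 :: PProj 0 :: projs 2 k') end
  | PMu f => PComp PRED [PComp (PPrim PZero
                   (muStepP (PProj 1) (PProj 0) (PComp (C f (S k)) (PProj 2 :: PProj 0 :: projs 3 k))))
                   (PProj 0 :: PProj 0 :: projs 1 k)]
  end.

Fixpoint prf_ind2 (P : prf -> Prop) (H0 : P PZero) (H1 : P PSucc) (H2 : forall i, P (PProj i))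
  (H3 : forall f gs, P f -> Forall P gs -> P (PComp f gs))
  (H4 : forall f g, P f -> P g -> P (PPrim f g)) (H5 : forall f, P f -> P (PMu f)) (e : prf) : P e :=
  match e with
  | PZero => H0 | PSucc => H1 | PProj i => H2 i
  | PComp f gs => H3 f gs (prf_ind2 P H0 H1 H2 H3 H4 H5 f)
      ((fix go (l : list prf) : Forall P l :=
          match l with [] => Forall_nil _ | g :: l' => Forall_cons _ (prf_ind2 P H0 H1 H2 H3 H4 H5 g) (go l') end) gs)
  | PPrim f g => H4 f g (prf_ind2 P H0 H1 H2 H3 H4 H5 f) (prf_ind2 P H0 H1 H2 H3 H4 H5 g)
  | PMu f => H5 f (prf_ind2 P H0 H1 H2 H3 H4 H5 f)
  end.

Lemma primrec_ext B1 B2 G1 G2 n w : (forall u, B1 u = B2 u) -> (forall u, G1 u = G2 u) ->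
  primrec B1 G1 n w = primrec B2 G2 n w.
Proof. intros HB HG. induction n; simpl; auto. rewrite IHn. auto. Qed.

Lemma C_correct e : forall k, computes (C e k) (S k) (fun u => F e k (hd 0 u) (tl u)).
Proof.
  induction e using prf_ind2; intros k.
  - eapply computes_ext. apply c_cst. reflexivity.
  - destruct k; simpl.
    + eapply computes_ext. apply c_zero. reflexivity.
    + eapply computes_ext. apply c_S, c_S, c_proj. lia.
      intros v Hv. destruct v as [|a [|b v]]; simpl in *; try lia; reflexivity.
  - simpl. destruct (Nat.ltb_spec i k).
    + eapply computes_ext. apply c_S, c_proj. lia.
      intros v Hv. destruct v; simpl in *; [lia|]. reflexivity.
    + eapply computes_ext. apply c_zero. reflexivity.
  - simpl. rename H into IHgs. eapply computes_ext. apply l_mul.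
    + instantiate (1 := fun u => allnz (map (fun g => F g k (hd 0 u) (tl u)) gs)).
      clear IHe. induction IHgs; simpl.
      * eapply computes_ext. apply (c_cst 1). reflexivity.
      * eapply computes_ext. apply l_mul. apply l_sg. apply H. apply IHIHgs.
        reflexivity.
    + eapply c_comp with (Gs := (fun u => hd 0 u) :: map (fun g u => pred (F g k (hd 0 u) (tl u))) gs).
      * constructor. eapply computes_ext. apply c_proj. lia.
        intros v Hv. destruct v; simpl in *; [lia|]. reflexivity.
        clear IHe. induction IHgs; simpl; constructor; auto. apply l_pred, H.
      * simpl. rewrite length_map. reflexivity.
      * apply IHe.
    + intros v Hv. simpl. f_equal. f_equal. rewrite !map_map. reflexivity.
  - destruct k as [|k']; simpl.
    + eapply computes_ext. apply c_zero. reflexivity.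
    + eapply computes_ext. eapply c_comp.
      * constructor. apply c_proj; lia. constructor. apply c_proj; lia. apply projs_F2. lia.
      * simpl. rewrite length_projs. reflexivity.
      * simpl. apply c_prim. apply IHe1. apply l_mul. apply l_sg, c_proj; lia.
        eapply c_comp. constructor. apply c_proj; lia. constructor. apply c_proj; lia.
        constructor. apply l_pred, c_proj; lia. apply projs_F2; lia.
        simpl. unfold projs. rewrite length_map, length_seq. reflexivity.
        apply IHe2.
      * intros v Hv. destruct v as [|t [|n w]]; simpl in Hv; try lia.
        injection Hv as Hv. cbn [map hd tl]. rewrite map_projs_eval. subst k'.
        rewrite nths_2. cbn [hd tl]. apply primrec_ext; intros u; auto.
        cbn [map hd tl]. rewrite map_projs_eval. reflexivity.
  - simpl. eapply computes_ext. apply l_pred. eapply c_comp.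
    + constructor. apply c_proj; lia. constructor. apply c_proj; lia. apply projs_F2; lia.
    + simpl. rewrite length_projs. reflexivity.
    + simpl. apply c_prim. apply c_zero.
      unfold muStepP. apply l_add. apply c_proj; lia. apply l_mul. apply l_nsg, c_proj; lia.
      apply l_add. apply l_nsg.
      eapply c_comp. constructor. apply c_proj; lia. constructor. apply c_proj; lia. apply projs_F2; lia.
      simpl; rewrite length_projs; reflexivity. apply IHe.
      apply l_mul. apply l_mul. apply l_sg.
      eapply c_comp. constructor. apply c_proj; lia. constructor. apply c_proj; lia. apply projs_F2; lia.
      simpl; rewrite length_projs; reflexivity. apply IHe.
      apply l_nsg, l_pred.
      eapply c_comp. constructor. apply c_proj; lia. constructor. apply c_proj; lia. apply projs_F2; lia.
      simpl; rewrite length_projs; reflexivity. apply IHe.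
      apply c_S, c_S, c_proj; lia.
    + intros v Hv. destruct v as [|t v]; simpl in Hv; try lia. injection Hv as Hv.
      cbn [map hd tl]. rewrite map_projs_eval. subst k. rewrite nths_1. f_equal.
      apply primrec_ext; intros u; auto.
      cbn [map hd tl]. rewrite !map_projs_eval. unfold muStep. reflexivity.
Qed.
Lemma F_prim_0 f g k' t w : F (PPrim f g) (S k') t (0 :: w) = F f k' t w.
Proof. reflexivity. Qed.

Lemma F_prim_S f g k' t m w : length w = k' ->
  F (PPrim f g) (S k') t (S m :: w) =
  sg (F (PPrim f g) (S k') t (m :: w)) *
  F g (S (S k')) t (m :: pred (F (PPrim f g) (S k') t (m :: w)) :: w).
Proof. intros Hw. cbn [F primrec hd tl nth]. rewrite <- Hw, nths_3. reflexivity. Qed.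

Definition Gmu f k t v j := primrec (fun _ => 0)
  (fun u => muStep (nth 1 u 0) (nth 0 u 0) (F f (S k) (nth 2 u 0) (nth 0 u 0 :: nths u 3 k))) j (t :: v).

Lemma F_mu f k t v : F (PMu f) k t v = pred (Gmu f k t v t).
Proof. reflexivity. Qed.
Lemma Gmu_0 f k t v : Gmu f k t v 0 = 0.
Proof. reflexivity. Qed.
Lemma Gmu_S f k t v j : length v = k ->
  Gmu f k t v (S j) = muStep (Gmu f k t v j) j (F f (S k) t (j :: v)).
Proof. intros Hv. unfold Gmu. cbn [primrec nth]. rewrite <- Hv, nths_3. reflexivity. Qed.

Lemma allnz_01 l : allnz l = 0 \/ allnz l = 1.
Proof. induction l; simpl; auto. destruct a; simpl; lia. Qed.

Lemma allnz_evals gs k t v :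
  Forall (fun g => forall k t v y, length v = k -> F g k t v = S y -> eval g v y) gs ->
  length v = k -> allnz (map (fun g => F g k t v) gs) <> 0 ->
  evals gs v (map (fun g => pred (F g k t v)) gs).
Proof.
  intros H Hv. induction H; simpl; intros Hz. constructor.
  destruct (F x k t v) eqn:E; simpl in Hz; [lia|].
  constructor. apply (H k t); auto. apply IHForall. lia.
Qed.

Lemma F_sound e : forall k t v y, length v = k -> F e k t v = S y -> eval e v y.
Proof.
  induction e using prf_ind2; intros k t v y Hv HF.
  - simpl in HF. injection HF as <-. constructor.
  - simpl in HF. destruct k; [discriminate|]. destruct v; simpl in Hv; [discriminate|].
    simpl in HF. injection HF as <-. constructor.
  - simpl in HF. destruct (Nat.ltb_spec i k); [|discriminate]. injection HF as <-.
    constructor. apply nth_error_nth'. lia.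
  - simpl in HF. rename H into IHgs.
    destruct (allnz (map (fun g => F g k t v) gs)) eqn:E; [simpl in HF; discriminate|].
    assert (n = 0) by (pose proof (allnz_01 (map (fun g => F g k t v) gs)); lia). subst n.
    econstructor. apply (allnz_evals _ k t); auto. rewrite E; discriminate.
    apply (IHe (length gs) t). rewrite length_map; auto. rewrite Nat.mul_1_l in HF. exact HF.
  - destruct k as [|k']; [simpl in HF; discriminate|].
    destruct v as [|n w]; simpl in Hv; [discriminate|]. injection Hv as Hv.
    revert y HF. induction n; intros y HF.
    + rewrite F_prim_0 in HF. constructor. eapply IHe1; eauto.
    + rewrite F_prim_S in HF by auto.
      destruct (F (PPrim e1 e2) (S k') t (n :: w)) eqn:E; simpl in HF; [discriminate|].
      econstructor. apply IHn. reflexivity. eapply IHe2. 2: rewrite Nat.add_0_r in HF; exact HF.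
      simpl. lia.
  - rewrite F_mu in HF.
    assert (Inv : forall j, (Gmu e k t v j = 0 -> forall m, m < j -> exists q, F e (S k) t (m :: v) = S (S q)) /\
        (forall y, Gmu e k t v j = S (S y) -> y < j /\ F e (S k) t (y :: v) = 1 /\
              forall m, m < y -> exists q, F e (S k) t (m :: v) = S (S q))).
    { induction j.
      - rewrite Gmu_0. split. intros _ m Hm; lia. intros y0 H0; discriminate.
      - rewrite Gmu_S by auto. destruct IHj as [I1 I2]. unfold muStep.
        destruct (Gmu e k t v j) as [|z] eqn:EG.
        + specialize (I1 eq_refl).
          destruct (F e (S k) t (j :: v)) as [|[|q]] eqn:Es; simpl.
          * split; intros; discriminate.
          * split. intros; discriminate. intros y0 Hy0. injection Hy0 as <-.
            rewrite !Nat.add_0_r. repeat split; try lia; try assumption; intros m Hm; apply I1; lia.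
          * split. intros _ m Hm. destruct (Nat.eq_dec m j). subst. eauto. apply I1. lia.
            intros; discriminate.
        + simpl. rewrite Nat.add_0_r. split. intros; discriminate.
          intros y0 Hy0. rewrite Hy0 in I2. destruct (I2 y0 eq_refl) as [A B]. split. lia. exact B. }
    destruct (Gmu e k t v t) as [|[|y']] eqn:EG; simpl in HF; try discriminate.
    injection HF as <-. destruct (proj2 (Inv t) y' EG) as (_ & A & B).
    constructor. eapply IHe. 2: exact A. simpl; lia.
    intros m Hm. destruct (B m Hm) as [q Hq]. exists q. eapply IHe. 2: exact Hq. simpl; lia.
Qed.
Lemma evals_length gs v ys : evals gs v ys -> length ys = length gs.
Proof. induction 1; simpl; auto. Qed.

Lemma collect_T (Q : nat -> nat -> Prop) n :
  (forall m, m < n -> exists T, forall t, T <= t -> Q m t) ->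
  exists T, forall m, m < n -> forall t, T <= t -> Q m t.
Proof.
  induction n; intros H. exists 0. intros; lia.
  destruct IHn as [T1 H1]. intros m Hm; apply H; lia.
  destruct (H n) as [T2 H2]. lia.
  exists (T1 + T2). intros m Hm t Ht. destruct (Nat.eq_dec m n). subst. apply H2; lia.
  apply H1; lia.
Qed.

Lemma F_complete e : forall v y k, eval e v y -> length v = k ->
  exists T, forall t, T <= t -> F e k t v = S y.
Proof.
  induction e using prf_ind2; intros v y k Hev Hv.
  - inversion Hev; subst. exists 0. reflexivity.
  - inversion Hev; subst. exists 0. intros. simpl. reflexivity.
  - inversion Hev; subst. exists 0. intros. simpl.
    assert (i < length v) by (apply nth_error_Some; congruence).
    destruct (Nat.ltb_spec i (length v)); [|lia]. f_equal.
    erewrite nth_error_nth; eauto.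
  - rename H into IHgs. inversion Hev; subst.
    assert (Hgs : exists T, forall t, T <= t -> map (fun g => F g (length v) t v) gs = map S ys).
    { clear H4 IHe Hev. induction H1.
      - exists 0. reflexivity.
      - inversion IHgs; subst. destruct (H3 _ _ _ H eq_refl) as [T1 HT1].
        destruct (IHevals H4) as [T2 HT2]. exists (T1 + T2). intros t Ht. simpl.
        rewrite HT1, HT2 by lia. reflexivity. }
    destruct Hgs as [T1 HT1]. destruct (IHe _ _ (length gs) H4) as [T2 HT2].
    apply (evals_length _ _ _ H1).
    exists (T1 + T2). intros t Ht. simpl. rewrite HT1 by lia.
    assert (E : map (fun g => pred (F g (length v) t v)) gs = ys).
    { rewrite <- (map_map (fun g => F g (length v) t v) pred), HT1 by lia. rewrite map_map. apply map_id. }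
    rewrite E, HT2 by lia.
    assert (allnz (map S ys) = 1) as ->. { clear. induction ys as [|a ys IH]; [reflexivity|]. unfold allnz in *; simpl in *. rewrite IH. reflexivity. }
    lia.
  - destruct v as [|n w]; [inversion Hev|]. simpl in Hv. subst k.
    revert y Hev. induction n; intros y Hev.
    + inversion Hev; subst. destruct (IHe1 w y (length w)) as [T HT]; [assumption|reflexivity|].
      exists T. intros t Ht. rewrite F_prim_0. auto.
    + inversion Hev; subst. match goal with H : eval (PPrim _ _) _ ?z |- _ => rename z into zz; destruct (IHn _ H) as [T1 HT1] end.
      destruct (IHe2 (n :: zz :: w) y (S (S (length w)))) as [T2 HT2]; [assumption|reflexivity|].
      exists (T1 + T2). intros t Ht. rewrite F_prim_S by auto. rewrite HT1 by lia.
      simpl pred. rewrite HT2 by lia. simpl. lia.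
  - inversion Hev; subst.
    destruct (IHe (y :: v) 0 (S (length v))) as [T0 HT0]; [assumption|reflexivity|].
    destruct (collect_T (fun m t => exists q, F e (S (length v)) t (m :: v) = S (S q)) y) as [T1 HT1].
    { intros m Hm. match goal with H : forall m, m < y -> _ |- _ => destruct (H m Hm) as [q Hq] end.
      destruct (IHe _ _ (S (length v)) Hq eq_refl) as [T HT]. exists T. intros t Ht. exists q. auto. }
    exists (T0 + T1 + S y). intros t Ht. rewrite F_mu.
    assert (A : forall j, j <= y -> Gmu e (length v) t v j = 0).
    { induction j; intros Hj. apply Gmu_0. rewrite Gmu_S by auto. rewrite IHj by lia.
      destruct (HT1 j ltac:(lia) t ltac:(lia)) as [q Hq]. rewrite Hq. reflexivity. }
    assert (B : forall j, S y <= j -> Gmu e (length v) t v j = S (S y)).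
    { induction j; intros Hj. lia. rewrite Gmu_S by auto.
      destruct (Nat.eq_dec j y).
      - subst. rewrite A by lia. rewrite HT0 by lia. unfold muStep; simpl; lia.
      - rewrite IHj by lia. unfold muStep. simpl. lia. }
    rewrite B by lia. reflexivity.
Qed.

Lemma evals_det gs : Forall (fun e => forall v y1 y2, eval e v y1 -> eval e v y2 -> y1 = y2) gs ->
  forall v a b, evals gs v a -> evals gs v b -> a = b.
Proof.
  induction 1; intros v a b Ha Hb; inversion Ha; inversion Hb; subst; auto.
  f_equal; eauto.
Qed.

Lemma eval_det e : forall v y1 y2, eval e v y1 -> eval e v y2 -> y1 = y2.
Proof.
  induction e using prf_ind2; intros v y1 y2 H1 H2.
  - inversion H1; inversion H2; subst; auto.
  - inversion H1; inversion H2; subst. congruence.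
  - inversion H1; inversion H2; subst. congruence.
  - rename H into IHgs. inversion H1; inversion H2; subst.
    match goal with Ha : evals gs v ?a, Hb : evals gs v ?b |- _ =>
      assert (a = b) by (eapply evals_det; eauto) end.
    subst. eauto.
  - destruct v as [|n w]; [inversion H1|]. revert y1 y2 H1 H2. induction n; intros y1 y2 H1 H2.
    + inversion H1; inversion H2; subst. eauto.
    + inversion H1; inversion H2; subst.
      assert (z = z0) by eauto. subst. eauto.
  - inversion H1; inversion H2; subst.
    destruct (Nat.lt_trichotomy y1 y2) as [Hl|[Hl|Hl]]; auto.
    + match goal with H : forall m, m < y2 -> _ |- _ => destruct (H _ Hl) as [q Hq] end.
      match goal with H : eval e (y1 :: v) 0 |- _ => specialize (IHe _ _ _ H Hq) end. discriminate.
    + match goal with H : forall m, m < y1 -> _ |- _ => destruct (H _ Hl) as [q Hq] end.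
      match goal with H : eval e (y2 :: v) 0 |- _ => specialize (IHe _ _ _ H Hq) end. discriminate.
Qed.
Section Order.
Variable e : prf.

Definition Rb y p q := sg (bsum (fun t => F e 2 t [p;q]) (S y)).
Definition Rr y p q := exists t, t <= y /\ F e 2 t [p;q] <> 0.

Lemma bsum_pos f n : bsum f n <> 0 <-> exists i, i < n /\ f i <> 0.
Proof.
  induction n; simpl. split. lia. intros (i & Hi & _); lia.
  split.
  - intros H. destruct (f n) eqn:E. rewrite Nat.add_0_r in H. destruct (proj1 IHn H) as (i & ? & ?).
    exists i; split; auto. exists n. split. lia. lia.
  - intros (i & Hi & Hf). destruct (Nat.eq_dec i n). subst. lia.
    assert (bsum f n <> 0) by (apply IHn; exists i; split; auto; lia). lia.
Qed.

Lemma sg_01 n : sg n = 0 \/ sg n = 1.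
Proof. destruct n; simpl; auto. Qed.
Lemma sg_1 n : sg n = 1 <-> n <> 0.
Proof. destruct n; simpl; split; intros; auto; lia. Qed.

Lemma Rb_spec y p q : Rb y p q = 1 <-> Rr y p q.
Proof.
  unfold Rb, Rr. rewrite sg_1, bsum_pos. split; intros (t & ? & ?); exists t; split; auto; lia.
Qed.
Lemma Rb_01 y p q : Rb y p q = 0 \/ Rb y p q = 1.
Proof. apply sg_01. Qed.

Lemma Rr_mono y y' p q : Rr y p q -> y <= y' -> Rr y' p q.
Proof. intros (t & ? & ?) ?. exists t; split; auto; lia. Qed.

Definition cfun x y w H := b2n (w =? x) + b2n (x <? w) *
   sg (bsum (fun w' => bit H w' * Rb y (first w') (first w)) w).

Fixpoint Hf x y w := match w with 0 => 0 | S w => Hf x y w + 2 ^ w * cfun x y w (Hf x y w) end.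

Definition sqb x y := b2n (x <? y) * sg (bsum (fun w' => bit (Hf x y y) w' * Rb y (first w') (first y)) y).

Inductive ch (y x : nat) : nat -> Prop :=
| ch_refl : ch y x x
| ch_step w' w : ch y x w' -> w' < w -> Rr y (first w') (first w) -> ch y x w.

Lemma cfun_01 x y w H : cfun x y w H <= 1.
Proof.
  unfold cfun. destruct (Nat.eqb_spec w x); destruct (Nat.ltb_spec x w); simpl; try lia.
  pose proof (sg_01 (bsum (fun w' => bit H w' * Rb y (first w') (first w)) w)). lia.
Qed.

Lemma Hf_lt x y w : Hf x y w < 2 ^ w.
Proof.
  induction w; simpl. lia. pose proof (cfun_01 x y w (Hf x y w)).
  assert (2 ^ w * cfun x y w (Hf x y w) <= 2 ^ w) by nia. lia.
Qed.

Lemma bit_lo H w c w' : w' < w -> bit (H + 2 ^ w * c) w' = bit H w'.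
Proof.
  intros Hw. unfold bit. replace (2 ^ w) with (2 ^ w' * 2 ^ (w - w')) by (rewrite <- Nat.pow_add_r; f_equal; lia).
  assert (2 ^ w' <> 0) by (apply Nat.pow_nonzero; lia).
  replace (H + 2 ^ w' * 2 ^ (w - w') * c) with (H + (2 ^ (w - w') * c) * 2 ^ w') by lia.
  rewrite Nat.div_add by auto.
  replace (2 ^ (w - w')) with (2 * 2 ^ (w - w' - 1)) by (rewrite <- Nat.pow_succ_r'; f_equal; lia).
  replace (H / 2 ^ w' + 2 * 2 ^ (w - w' - 1) * c) with (H / 2 ^ w' + (2 ^ (w - w' - 1) * c) * 2) by lia.
  apply Nat.Div0.mod_add.
Qed.

Lemma bit_hi H w c : H < 2 ^ w -> c <= 1 -> bit (H + 2 ^ w * c) w = c.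
Proof.
  intros HH Hc. unfold bit. assert (2 ^ w <> 0) by (apply Nat.pow_nonzero; lia).
  replace (H + 2 ^ w * c) with (H + c * 2 ^ w) by lia. rewrite Nat.div_add by auto.
  rewrite Nat.div_small by auto. simpl. destruct c as [|[|]]; simpl; auto; lia.
Qed.

Lemma bit_Hf x y w w' : w' < w -> bit (Hf x y w) w' = cfun x y w' (Hf x y w').
Proof.
  induction w; intros Hw. lia. simpl. destruct (Nat.eq_dec w' w).
  - subst. apply bit_hi. apply Hf_lt. apply cfun_01.
  - rewrite bit_lo by lia. apply IHw. lia.
Qed.

Lemma ch_ge y x w : ch y x w -> x <= w.
Proof. induction 1; lia. Qed.

Lemma ch_char y x w : ch y x w <-> w = x \/ (x < w /\ exists w', w' < w /\ ch y x w' /\ Rr y (first w') (first w)).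
Proof.
  split.
  - intros H. inversion H; subst. auto. right. split. pose proof (ch_ge _ _ _ H0). lia. eauto.
  - intros [->|(_ & w' & ? & ? & ?)]. constructor. econstructor; eauto.
Qed.

Lemma b2n_1 b : b2n b = 1 <-> b = true.
Proof. destruct b; simpl; split; intros; auto; discriminate. Qed.

Lemma cval_ch x y w : cfun x y w (Hf x y w) = 1 <-> ch y x w.
Proof.
  induction w as [w IH] using lt_wf_ind.
  rewrite ch_char. unfold cfun.
  destruct (Nat.eqb_spec w x) as [Heq|Hne].
  { subst. rewrite Nat.ltb_irrefl. simpl. split; intros; auto. }
  destruct (Nat.ltb_spec x w) as [Hlt|Hge]; simpl.
  - rewrite Nat.add_0_r, sg_1, bsum_pos. split.
    + intros (w' & Hw' & Hn). right. split; auto. exists w'. split; auto.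
      rewrite bit_Hf in Hn by auto. pose proof (cfun_01 x y w' (Hf x y w')).
      pose proof (Rb_01 y (first w') (first w)).
      assert (cfun x y w' (Hf x y w') = 1 /\ Rb y (first w') (first w) = 1) as [A B] by nia.
      split. apply IH; auto. apply Rb_spec; auto.
    + intros [?|(_ & w' & Hw' & Hc & HR)]. lia. exists w'. split; auto.
      rewrite bit_Hf by auto. rewrite (proj2 (IH w' Hw') Hc). rewrite (proj2 (Rb_spec _ _ _) HR). lia.
  - split; intros H; [lia | destruct H as [H|[H _]]; lia].
Qed.

Lemma sqb_spec x y : sqb x y = 1 <-> x < y /\ ch y x y.
Proof.
  unfold sqb. destruct (Nat.ltb_spec x y); simpl.
  - rewrite Nat.add_0_r, sg_1, bsum_pos. rewrite (ch_char y x y). split.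
    + intros (w' & Hw' & Hn). split; auto. right. split; auto. exists w'. split; auto.
      rewrite bit_Hf in Hn by auto. pose proof (cfun_01 x y w' (Hf x y w')).
      pose proof (Rb_01 y (first w') (first y)).
      assert (cfun x y w' (Hf x y w') = 1 /\ Rb y (first w') (first y) = 1) as [A B] by nia.
      split. apply cval_ch; auto. apply Rb_spec; auto.
    + intros [_ [?|(_ & w' & Hw' & Hc & HR)]]. lia. exists w'. split; auto.
      rewrite bit_Hf by auto. rewrite (proj2 (cval_ch _ _ _) Hc). rewrite (proj2 (Rb_spec _ _ _) HR). lia.
  - split; intros Hq; lia.
Qed.

Lemma sqb_01 x y : sqb x y = 0 \/ sqb x y = 1.
Proof. unfold sqb. destruct (x <? y); simpl. rewrite Nat.add_0_r. apply sg_01. auto. Qed.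

Lemma ch_mono y y' x w : ch y x w -> y <= y' -> ch y' x w.
Proof. induction 1; intros Hy. constructor. econstructor; eauto. eapply Rr_mono; eauto. Qed.

Lemma ch_trans y x w z : ch y x w -> ch y w z -> ch y x z.
Proof. intros H1 H2. induction H2; auto. econstructor; eauto. Qed.

End Order.
Lemma l_comp3 OP (op : nat -> nat -> nat -> nat) a b c k A B Cc :
  computes OP 3 (fun v => op (nth 0 v 0) (nth 1 v 0) (nth 2 v 0)) ->
  computes a k A -> computes b k B -> computes c k Cc ->
  computes (PComp OP [a; b; c]) k (fun v => op (A v) (B v) (Cc v)).
Proof.
  intros HO Ha Hb Hc. eapply computes_ext. eapply c_comp with (Gs := [A; B; Cc]).
  repeat constructor; auto. reflexivity. exact HO. intros; reflexivity.
Qed.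

Ltac f2 := repeat (apply Forall2_cons || apply Forall2_nil).

Section Progs.
Variable e : prf.

Definition RB := PComp SG [PComp (BSUM (C e 2) 2) [PComp PSucc [PProj 0]; PProj 1; PProj 2]].
Lemma c_RB : computes RB 3 (fun v => Rb e (nth 0 v 0) (nth 1 v 0) (nth 2 v 0)).
Proof.
  eapply computes_ext. apply l_sg. eapply c_comp with (Gs := [fun v => S (nth 0 v 0); fun v => nth 1 v 0; fun v => nth 2 v 0]).
  f2. apply c_S, c_proj; lia. apply c_proj; lia. apply c_proj; lia.
  reflexivity. apply c_BSUM. apply C_correct.
  intros v Hv. destruct v as [|y [|p [|q [|]]]]; simpl in Hv; try lia. reflexivity.
Qed.
Lemma l_rb a b c k A B Cc : computes a k A -> computes b k B -> computes c k Cc ->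
  computes (PComp RB [a; b; c]) k (fun v => Rb e (A v) (B v) (Cc v)).
Proof. apply (l_comp3 _ (Rb e)). apply c_RB. Qed.

(* INNER on (w' :: w :: H :: x :: y) *)
Definition INNER := PComp MUL [PComp BIT [PProj 2; PProj 0];
                      PComp RB [PProj 4; PComp FIRST [PProj 0]; PComp FIRST [PProj 1]]].
Definition CF := PComp ADD [PComp EQB [PProj 0; PProj 2];
                  PComp MUL [PComp LTB [PProj 2; PProj 0];
                    PComp SG [PComp (BSUM INNER 4) [PProj 0; PProj 0; PProj 1; PProj 2; PProj 3]]]].
Definition HF := PPrim PZero (PComp ADD [PProj 1; PComp MUL [PComp POW2 [PProj 0]; CF]]).

Lemma c_HF : computes HF 3 (fun v => Hf e (nth 1 v 0) (nth 2 v 0) (nth 0 v 0)).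
Proof.
  assert (HI : computes INNER 5 (fun u => bit (nth 2 u 0) (nth 0 u 0) * Rb e (nth 4 u 0) (first (nth 0 u 0)) (first (nth 1 u 0)))).
  { apply l_mul. apply l_bit; apply c_proj; lia. apply l_rb. apply c_proj; lia.
    apply l_first, c_proj; lia. apply l_first, c_proj; lia. }
  eapply computes_ext. apply c_prim. apply c_zero.
  apply l_add. apply c_proj; lia. apply l_mul. apply l_pow2, c_proj; lia.
  apply l_add. apply l_eqb; apply c_proj; lia. apply l_mul. apply l_ltb; apply c_proj; lia.
  apply l_sg. eapply c_comp with (Gs := [fun v => nth 0 v 0; fun v => nth 0 v 0; fun v => nth 1 v 0; fun v => nth 2 v 0; fun v => nth 3 v 0]).
  f2; apply c_proj; lia. reflexivity. apply c_BSUM. exact HI.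
  intros v Hv. destruct v as [|w [|x [|y [|]]]]; simpl in Hv; try lia. cbn [hd tl].
  induction w. reflexivity. cbn [primrec]. rewrite IHw. cbn [Hf]. unfold cfun. reflexivity.
Qed.

Definition INNER2 := PComp MUL [PComp BIT [PProj 1; PProj 0];
                      PComp RB [PProj 3; PComp FIRST [PProj 0]; PComp FIRST [PProj 3]]].
Definition SQB := PComp MUL [PComp LTB [PProj 0; PProj 1];
   PComp SG [PComp (BSUM INNER2 3) [PProj 1; PComp HF [PProj 1; PProj 0; PProj 1]; PProj 0; PProj 1]]].

Lemma c_SQB : computes SQB 2 (fun v => sqb e (nth 0 v 0) (nth 1 v 0)).
Proof.
  assert (HI : computes INNER2 4 (fun u => bit (nth 1 u 0) (nth 0 u 0) * Rb e (nth 3 u 0) (first (nth 0 u 0)) (first (nth 3 u 0)))).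
  { apply l_mul. apply l_bit; apply c_proj; lia. apply l_rb. apply c_proj; lia.
    apply l_first, c_proj; lia. apply l_first, c_proj; lia. }
  eapply computes_ext. apply l_mul. apply l_ltb; apply c_proj; lia.
  apply l_sg. eapply c_comp with (Gs := [fun v => nth 1 v 0; fun v => Hf e (nth 0 v 0) (nth 1 v 0) (nth 1 v 0); fun v => nth 0 v 0; fun v => nth 1 v 0]).
  f2; try (apply c_proj; lia).
  eapply computes_ext. apply (l_comp3 _ (fun a b c => Hf e b c a)). apply c_HF.
  apply c_proj; lia. apply c_proj; lia. apply c_proj; lia. reflexivity.
  reflexivity. apply c_BSUM. exact HI.
  intros v Hv. destruct v as [|x [|y [|]]]; simpl in Hv; try lia. reflexivity.
Qed.

End Progs.

Lemma halts_mu h (Hh : list nat -> nat) (cond : list nat -> Prop) v :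
  computes h (S (length v)) Hh ->
  (forall j, Hh (j :: v) = 0 <-> cond v) ->
  (halts (PMu h) v <-> cond v).
Proof.
  intros Hc Hcond. split.
  - intros [y Hy]. inversion Hy; subst.
    assert (Hh (y :: v) = 0). { eapply eval_det. apply Hc. reflexivity. assumption. }
    apply (Hcond y); auto.
  - intros Hv. exists 0. constructor.
    assert (E : Hh (0 :: v) = 0) by (apply Hcond; auto).
    pose proof (Hc (0 :: v) eq_refl) as H0. rewrite E in H0. exact H0.
    intros; lia.
Qed.

Definition EQFIRST := PComp NSG [PComp EQB [PComp FIRST [PProj 1]; PProj 2]].
Lemma c_EQFIRST : computes EQFIRST 3 (fun u => nsg (b2n (first (nth 1 u 0) =? nth 2 u 0))).
Proof. apply l_nsg, l_eqb. apply l_first, c_proj; lia. apply c_proj; lia. Qed.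

Lemma halts_first n m : halts (PMu EQFIRST) [n; m] <-> first n = m.
Proof.
  apply (halts_mu EQFIRST (fun u => nsg (b2n (first (nth 1 u 0) =? nth 2 u 0))) (fun v => first (nth 0 v 0) = nth 1 v 0)). apply c_EQFIRST.
  intros j. simpl. destruct (Nat.eqb_spec (first n) m); simpl; split; intros; auto; try lia.
Qed.

Definition EQFIRST2 := PComp NSG [PComp EQB [PComp FIRST [PProj 2]; PProj 1]].
Lemma c_EQFIRST2 : computes EQFIRST2 3 (fun u => nsg (b2n (first (nth 2 u 0) =? nth 1 u 0))).
Proof. apply l_nsg, l_eqb. apply l_first, c_proj; lia. apply c_proj; lia. Qed.

Lemma halts_first2 a x : halts (PMu EQFIRST2) [a; x] <-> first x = a.
Proof.
  apply (halts_mu EQFIRST2 (fun u => nsg (b2n (first (nth 2 u 0) =? nth 1 u 0))) (fun v => first (nth 1 v 0) = nth 0 v 0)). apply c_EQFIRST2.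
  intros j. simpl. destruct (Nat.eqb_spec (first x) a); simpl; split; intros; auto; try lia.
Qed.

Lemma first_block x : first x = 0 -> forall i, i <= x + 1 -> first (x + 1 + i) = x + 1 - i.
Proof.
  intros H0 i. induction i; intros Hi.
  - rewrite Nat.add_0_r, Nat.add_1_r. simpl. rewrite H0. simpl. lia.
  - replace (x + 1 + S i) with (S (x + 1 + i)) by lia. cbn [first].
    rewrite IHi by lia. destruct (x + 1 - i) eqn:E; [lia|]. simpl. lia.
Qed.

Lemma first_zeros N : exists x, N <= x /\ first x = 0.
Proof.
  induction N. exists 0; auto. destruct IHN as (x & Hx & H0).
  exists (x + 1 + (x + 1)). split. lia. rewrite first_block by auto || lia. lia.
Qed.

Lemma first_inf a N : exists y, N <= y /\ first y = a.
Proof.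
  destruct (first_zeros (N + a)) as (x & Hx & H0).
  exists (x + 1 + (x + 1 - a)). split. lia. rewrite first_block by (auto || lia). lia.
Qed.

Lemma ideal_eq {R} (A B : ideals R) : (forall n, proj1_sig A n <-> proj1_sig B n) -> A = B.
Proof.
  destruct A as [P HP], B as [Q HQ]; simpl. intros H.
  assert (P = Q) by (extensionality n; apply propositional_extensionality; auto). subst.
  f_equal. apply proof_irrelevance.
Qed.

Section Main.
Variable prec : nat -> nat -> Prop.
Variable e : prf.
Hypothesis He : forall a b, prec a b <-> halts e [a; b].
Hypothesis Htr : transitive_rel prec.

Definition sq x y := sqb e x y = 1.

Lemma prec_F a b : prec a b <-> exists t, F e 2 t [a; b] <> 0.
Proof.
  rewrite He. split.
  - intros [y Hy]. destruct (F_complete e [a;b] y 2 Hy eq_refl) as [T HT].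
    exists T. rewrite HT by lia. discriminate.
  - intros [t Ht]. destruct (F e 2 t [a;b]) eqn:E. lia. exists n. eapply F_sound; eauto.
Qed.

Lemma Rr_sound y p q : Rr e y p q -> prec p q.
Proof. intros (t & _ & Ht). apply prec_F. eauto. Qed.

Lemma Rr_complete p q : prec p q -> exists T, forall y, T <= y -> Rr e y p q.
Proof. intros H. apply prec_F in H. destruct H as [t Ht]. exists t. intros y Hy. exists t; auto. Qed.

Lemma ch_sound y x w : ch e y x w -> x = w \/ prec (first x) (first w).
Proof.
  induction 1. auto. right. apply Rr_sound in H1. destruct IHch. subst. auto. eapply Htr; eauto.
Qed.

Lemma sq_iff x y : sq x y <-> x < y /\ ch e y x y.
Proof. apply sqb_spec. Qed.

Lemma sq_sound x y : sq x y -> prec (first x) (first y).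
Proof. intros H. apply sq_iff in H. destruct H as [H1 H2]. destruct (ch_sound _ _ _ H2). lia. auto. Qed.

Lemma sq_trans : transitive_rel sq.
Proof.
  intros x w y H1 H2. apply sq_iff in H1, H2. apply sq_iff. destruct H1, H2. split. lia.
  eapply ch_trans. eapply ch_mono. eauto. lia. auto.
Qed.

Lemma sq_direct x y : x < y -> Rr e y (first x) (first y) -> sq x y.
Proof. intros H1 H2. apply sq_iff. split; auto. econstructor. constructor. auto. auto. Qed.

Lemma up J : is_ideal sq J -> forall z, J z -> forall N, exists z', J z' /\ sq z z' /\ N <= z'.
Proof.
  intros (Hne & Hlow & Hdir) z Hz N. induction N.
  - destruct (Hdir z z Hz Hz) as (c & Hc & H1 & _). exists c. auto with arith.
  - destruct IHN as (z' & Hz' & Hs & HN). destruct (Hdir z' z' Hz' Hz') as (c & Hc & H1 & _).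
    exists c. split; auto. split. eapply sq_trans; eauto. apply sq_iff in H1. lia.
Qed.

Lemma key J : is_ideal sq J -> forall z, J z -> forall x, prec (first x) (first z) -> J x.
Proof.
  intros HJ z Hz x Hp. destruct (up J HJ z Hz (S x)) as (y & Hy & Hzy & Hxy).
  assert (prec (first x) (first y)) by (eapply Htr; eauto; apply sq_sound; auto).
  destruct (Rr_complete _ _ H) as [T HT].
  destruct (up J HJ y Hy T) as (y2 & Hy2 & Hyy2 & HT2).
  destruct HJ as (_ & Hlow & _). apply (Hlow y2 x); auto.
  apply sq_iff in Hyy2. destruct Hyy2 as [Hlt Hch]. apply sq_iff. split. lia.
  eapply ch_trans; [|exact Hch]. econstructor. constructor. lia. apply HT. lia.
Qed.

Definition fI (I : nat -> Prop) : nat -> Prop := fun x => I (first x).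
Definition gJ (J : nat -> Prop) : nat -> Prop := fun a => exists x, J x /\ first x = a.

Lemma fI_ideal I : is_ideal prec I -> is_ideal sq (fI I).
Proof.
  intros (Hne & Hlow & Hdir). unfold fI. split; [|split].
  - destruct Hne as [a Ha]. destruct (first_inf a 0) as (x & _ & Hx). exists x. congruence.
  - intros a b Hba Ha. apply (Hlow (first a)); auto. apply sq_sound; auto.
  - intros a b Ha Hb. destruct (Hdir _ _ Ha Hb) as (c & Hc & H1 & H2).
    destruct (Rr_complete _ _ H1) as [T1 HT1]. destruct (Rr_complete _ _ H2) as [T2 HT2].
    destruct (first_inf c (S (a + b + T1 + T2))) as (y & Hy & Hfy).
    exists y. rewrite Hfy. split; auto. split; apply sq_direct; try lia; rewrite Hfy.
    apply HT1; lia. apply HT2; lia.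
Qed.

Lemma gJ_ideal J : is_ideal sq J -> is_ideal prec (gJ J).
Proof.
  intros HJ. pose proof HJ as (Hne & Hlow & Hdir). unfold gJ. split; [|split].
  - destruct Hne as [x Hx]. exists (first x), x. auto.
  - intros a b Hba (x & Hx & <-). destruct (first_inf b 0) as (xb & _ & Hxb).
    exists xb. split; auto. apply (key J HJ x Hx). rewrite Hxb. auto.
  - intros a b (x & Hx & <-) (x' & Hx' & <-). destruct (Hdir _ _ Hx Hx') as (c & Hc & H1 & H2).
    exists (first c). split. exists c; auto. split; apply sq_sound; auto.
Qed.

End Main.

Theorem proposition2 :
  forall prec : nat -> nat -> Prop,
    ce_rel prec -> transitive_rel prec ->
    exists sqsub : nat -> nat -> Prop,
      computable_rel sqsub /\ strict_partial_order sqsub /\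
      computably_homeomorphic prec sqsub.
Proof.
  intros prec [e He] Htr. exists (sq e). split; [|split].
  - exists (SQB e). intros a b. pose proof (c_SQB e [a; b] eq_refl) as H. simpl in H. split.
    + intros Hs. unfold sq in Hs. rewrite Hs in H. exact H.
    + intros Hs. unfold sq in Hs. destruct (sqb_01 e a b) as [E|E]; [|contradiction].
      rewrite E in H. exact H.
  - split. intros a Ha. apply (sq_iff e) in Ha. lia. apply (sq_trans e).
  - exists (fun I => exist _ (fI (proj1_sig I)) (fI_ideal prec e He Htr _ (proj2_sig I))).
    exists (fun J => exist _ (gJ (proj1_sig J)) (gJ_ideal prec e He Htr _ (proj2_sig J))).
    split; [|split; [|split]].
    + intros [I HI]. apply ideal_eq. simpl. intros a. unfold gJ, fI. split.
      * intros (x & Hx & <-). auto.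
      * intros Ha. destruct (first_inf a 0) as (x & _ & Hx). exists x. rewrite Hx. auto.
    + intros [J HJ]. apply ideal_eq. simpl. intros x. unfold gJ, fI. split.
      * intros (x' & Hx' & Hf). pose proof HJ as (_ & _ & Hdir).
        destruct (Hdir _ _ Hx' Hx') as (c & Hc & H1 & _).
        apply (key prec e He Htr J HJ c Hc). rewrite <- Hf. apply (sq_sound prec e He Htr); auto.
      * intros Hx. exists x. auto.
    + exists (PMu EQFIRST). intros n [I HI]. simpl. unfold fI. split.
      * intros H. exists (first n). split; auto. apply halts_first. reflexivity.
      * intros (m & Hm & HIm). apply halts_first in Hm. subst. auto.
    + exists (PMu EQFIRST2). intros n [J HJ]. simpl. unfold gJ. split.
      * intros (x & Hx & Hf). exists x. split; auto. apply halts_first2. auto.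
      * intros (m & Hm & HJm). apply halts_first2 in Hm. exists m. auto.
Qed.
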